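(* Let $n\ge1$, let $\mathrm{d}_I$ be the interleaving distance on the category of cubically encoded persistence modules over $\mathbb R^n$ with respect to the vector $v=(1,\dots,1)\in\mathbb R^n$, and let $\mathrm{d}_{\|\cdot\|_1}$ be the path metric on this category induced by the Hilbert amplitude $\|M\|_1=\int_{\mathbb R^n}\dim M(x)\,d\lambda(x)$, $\lambda$ the Lebesgue measure. Then for all cubically encoded persistence modules $M,N$ over $\mathbb R^n$, \[ \mathrm{d}_I(M,N)\le 4\big(\mathrm{d}_{\|\cdot\|_1}(M,N)\big)^{1/n}. \]
   Context: $\mathrm{Vect}$ is the category of finite-dimensional vector spaces over a fixed field. A cube in $\mathbb R^n$ is a product $I_1\times\dots\times I_n$ of (possibly unbounded, open/closed/half-open) intervals of $\mathbb R$. A persistence module $M\colon\mathbb R^n\to\mathrm{Vect}$ is cubically encoded if there exist a finite poset $\mathcal P$, an order-preserving map $e\colon\mathbb R^n\to\mathcal P$ whose fibers are finite unions of cubes, a functor $M'\colon\mathcal P\to\mathrm{Vect}$ and an isomorphism $M\cong M'\circ e$; these form a full abelian subcategory of $\mathrm{Vect}^{\mathbb R^n}$. For a vector $v$ and $\varepsilon\ge0$, $M^{+\varepsilon}$ denotes $x\mapsto M(x+\varepsilon v)$. An $\varepsilon$-interleaving between $M$ and $N$ is a pair of natural transformations $\varphi\colon M\to N^{+\varepsilon}$, $\psi\colon N\to M^{+\varepsilon}$ with $\psi_{x+\varepsilon v}\circ\varphi_x=M(x\le x+2\varepsilon v)$ and $\varphi_{x+\varepsilon v}\circ\psi_x=N(x\le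 x+2\varepsilon v)$ for all $x$; $\mathrm{d}_I(M,N)$ is the infimum of $\varepsilon>0$ admitting an $\varepsilon$-interleaving ($\inf\emptyset=\infty$). For an amplitude $\alpha$ on an abelian category $\mathcal{A}$ (a function $\operatorname{ob}\mathcal{A}\to[0,\infty]$ with $\alpha(0)=0$, monotone under sub- and quotient objects in short exact sequences and subadditive: $\alpha(B)\le\alpha(A)+\alpha(C)$ for $0\to A\to B\to C\to0$ exact), the cost of a zigzag $A\xleftarrow{\gamma_1}C_1\xrightarrow{\gamma_2}\cdots\xleftarrow{\gamma_{n-1}}C_n\xrightarrow{\gamma_n}B$ is $\sum_i\alpha(\ker\gamma_i)+\alpha(\operatorname{coker}\gamma_i)$, and the path metric $\mathrm{d}_\alpha(A,B)$ is the infimum of costs of zigzags from $A$ to $B$ ($\inf\emptyset=\infty$). The Hilbert amplitude $\|\cdot\|_1$ is an amplitude on cubically encoded modules. *)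

(* Defs.v *)
From HB Require Import structures.
From mathcomp Require Import all_boot all_order all_algebra.
From mathcomp Require Import all_classical all_reals all_analysis.
Set Implicit Arguments. Unset Strict Implicit. Unset Printing Implicit Defensive.
Import Order.TTheory GRing.Theory Num.Theory.
Local Open Scope ring_scope.

(* Vect = finite-dimensional K-vector spaces, modelled (up to equivalence of
   categories) by K^d; a linear map K^a -> K^b is a matrix 'M_(a,b) acting on
   row vectors (v |-> v *m A), so composition x -> y -> z is  A_xy *m A_yz.     *)
Record pmod (K : fieldType) (T : Type) (le : T -> T -> Prop) := PMod {
  pdim : T -> nat;
  pmap : forall x y : T, 'M[K]_(pdim x, pdim y);   (* meaningful when le x y *)
  pmap_id : forall x, pmap x x = 1%:M;
  pmap_comp : forall x y z, le x y -> le y z -> pmap x z = pmap x y *m pmap y z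
}.

Record hom (K : fieldType) (T : Type) (le : T -> T -> Prop)
    (M N : pmod K le) := Hom {
  hcomp : forall x : T, 'M[K]_(pdim M x, pdim N x);
  hnat : forall x y, le x y -> pmap M x y *m hcomp y = hcomp x *m pmap N x y
}.

Section Rn.
Variables (R : realType) (n : nat).

Definition ptle (x y : n.-tuple R) : Prop := forall i : 'I_n, tnth x i <= tnth y i.

Definition shift (eps : R) (x : n.-tuple R) : n.-tuple R :=
  [tuple tnth x i + eps | i < n].

(* a cube I_1 x ... x I_n, each I_i an arbitrary (possibly unbounded,
   open/closed/half-open) interval of R *)
Definition in_cube (c : 'I_n -> interval R) (x : n.-tuple R) : Prop :=
  forall i : 'I_n, tnth x i \in c i.
End Rn.

Definition pmodRn (K : fieldType) (R : realType) (n : nat) :=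
  pmod K (@ptle R n).

Definition cubically_encoded (K : fieldType) (R : realType) (n : nat)
    (M : pmodRn K R n) : Prop :=
  exists (disp : Order.disp_t) (P : finPOrderType disp) (e : n.-tuple R -> P)
         (M' : pmod K (fun p q : P => (p <= q)%O)),
    (forall x y, ptle x y -> (e x <= e y)%O) /\
    (forall p : P, exists (k : nat) (c : 'I_k -> 'I_n -> interval R),
        forall x, e x = p <-> exists j : 'I_k, in_cube (c j) x) /\
    (exists (phi : forall x, 'M[K]_(pdim M x, pdim M' (e x)))
            (psi : forall x, 'M[K]_(pdim M' (e x), pdim M x)),
        (forall x, phi x *m psi x = 1%:M /\ psi x *m phi x = 1%:M) /\
        (forall x y, ptle x y ->
           pmap M x y *m phi y = phi x *m pmap M' (e x) (e y))).

Definition interleaving (K : fieldType) (R : realType) (n : nat)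
    (eps : R) (M N : pmodRn K R n) : Prop :=
  exists (phi : forall x, 'M[K]_(pdim M x, pdim N (shift eps x)))
         (psi : forall x, 'M[K]_(pdim N x, pdim M (shift eps x))),
    (forall x y, ptle x y ->
       pmap M x y *m phi y = phi x *m pmap N (shift eps x) (shift eps y)) /\
    (forall x y, ptle x y ->
       pmap N x y *m psi y = psi x *m pmap M (shift eps x) (shift eps y)) /\
    (forall x, phi x *m psi (shift eps x) = pmap M x (shift eps (shift eps x))) /\
    (forall x, psi x *m phi (shift eps x) = pmap N x (shift eps (shift eps x))).

Local Open Scope classical_set_scope.
Local Open Scope ereal_scope.

Definition interleaving_dist (K : fieldType) (R : realType) (n : nat)
    (M N : pmodRn K R n) : \bar R :=
  ereal_inf [set e%:E | e in [set e : R | (0 < e)%R /\ interleaving e M N]].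

(* Integral over R^n w.r.t. Lebesgue measure, as the iterated integral
   (Tonelli) of a nonnegative function. *)
Fixpoint lebint_Rn (R : realType) (n : nat) : (n.-tuple R -> \bar R) -> \bar R :=
  match n return (n.-tuple R -> \bar R) -> \bar R with
  | 0 => fun f => f [tuple]
  | n'.+1 => fun f =>
      \int[@lebesgue_measure R]_t lebint_Rn (fun x : n'.-tuple R => f (cons_tuple t x))
  end.

(* ||M||_1 = int dim M(x) dlambda(x); it only depends on the dimension
   function of M. *)
Definition hilbert (R : realType) (n : nat) (d : n.-tuple R -> nat) : \bar R :=
  lebint_Rn (fun x => ((d x)%:R)%:E).

Definition dim_ker (K : fieldType) (R : realType) (n : nat) (M N : pmodRn K R n)
    (f : hom M N) (x : n.-tuple R) : nat := \rank (kermx (hcomp f x)).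
Definition dim_coker (K : fieldType) (R : realType) (n : nat) (M N : pmodRn K R n)
    (f : hom M N) (x : n.-tuple R) : nat := (pdim N x - \rank (hcomp f x))%N.

Definition hom_cost (K : fieldType) (R : realType) (n : nat) (M N : pmodRn K R n)
    (f : hom M N) : \bar R :=
  hilbert (dim_ker f) + hilbert (dim_coker f).

(* zigzags  A = D_0 <-gl_0- C_1 -gr_0-> D_1 <-gl_1- C_2 -> ... <- C_m -> D_m = B
   in the category of cubically encoded modules, and their cost *)
Definition zigzag_cost (K : fieldType) (R : realType) (n : nat)
    (A B : pmodRn K R n) (c : \bar R) : Prop :=
  exists (m : nat) (C D : nat -> pmodRn K R n)
         (gl : forall i, hom (C i.+1) (D i)) (gr : forall i, hom (C i.+1) (D i.+1)),
    (0 < m)%N /\ D 0%N = A /\ D m = B /\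
    (forall i, (i <= m)%N -> cubically_encoded (D i)) /\
    (forall i, (0 < i <= m)%N -> cubically_encoded (C i)) /\
    c = \sum_(i < m) (hom_cost (gl i) + hom_cost (gr i)).

Definition hilbert_path_dist (K : fieldType) (R : realType) (n : nat)
    (A B : pmodRn K R n) : \bar R :=
  ereal_inf [set c | zigzag_cost A B c].

(* Main.v *)
Require Import Defs.
From HB Require Import structures.
From mathcomp Require Import all_boot all_order all_algebra.
From mathcomp Require Import all_classical all_reals all_analysis.
From mathcomp Require Import measurable_realfun.
From mathcomp Require Import lra.
Import Order.TTheory GRing.Theory Num.Theory.
Local Open Scope ring_scope.
Set Implicit Arguments. Unset Strict Implicit. Unset Printing Implicit Defensive.
Local Notation shift := Defs.shift.
Local Notation pmap := Defs.pmap.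
Local Notation hom := Defs.hom.

Module Integ.
Local Open Scope classical_set_scope.
Local Open Scope ereal_scope.

Section Integ.
Variable R : realType.

Lemma sup_add_le (A B : set (\bar R)) (S : \bar R) :
  A 0 -> B 0 -> (forall a b, A a -> B b -> a + b <= S) ->
  ereal_sup A + ereal_sup B <= S.
Proof.
move=> A0 B0 H.
have S0 : 0 <= S by have := H _ _ A0 B0; rewrite adde0.
case: S S0 H => [s| |] //= S0 H; last by rewrite leey.
have h1 b : B b -> ereal_sup A + b <= s%:E.
  move=> Bb; rewrite -lee_suber_addr //; apply: ge_ereal_sup => a Aa.
  by rewrite lee_suber_addr //; exact: H.
rewrite -lee_suber_addl //; apply: ge_ereal_sup => b Bb.
by rewrite lee_suber_addl //; exact: h1.
Qed.

Lemma int_mono (F G : R -> \bar R) :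
  (forall t, 0 <= F t) -> (forall t, F t <= G t) ->
  \int[@lebesgue_measure R]_t F t <= \int[@lebesgue_measure R]_t G t.
Proof.
move=> F0 FG.
have G0 t : 0 <= G t by exact: le_trans (F0 t) (FG t).
rewrite !ge0_integralTE //; apply: le_ereal_sup => _ [h hF <-].
by exists h => //= x; exact: le_trans (hF x) (FG x).
Qed.

Lemma int_superadd (F G : R -> \bar R) :
  (forall t, 0 <= F t) -> (forall t, 0 <= G t) ->
  \int[@lebesgue_measure R]_t F t + \int[@lebesgue_measure R]_t G t
    <= \int[@lebesgue_measure R]_t (F t + G t).
Proof.
move=> F0 G0.
have FG0 t : 0 <= F t + G t by rewrite adde_ge0.
rewrite !ge0_integralTE //; apply: sup_add_le.
- exists nnsfun0; [by move=> x /=; exact: F0|exact: sintegral0].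
- exists nnsfun0; [by move=> x /=; exact: G0|exact: sintegral0].
move=> _ _ [h1 h1F <-] [h2 h2G <-].
rewrite -sintegralD; apply: ereal_sup_ubound.
exists (add_nnsfun h1 h2) => //= x.
by rewrite EFinD; apply: leeD; [exact: h1F|exact: h2G].
Qed.

Lemma int_box (F : R -> \bar R) (a e k : R) :
  (0 <= e)%R -> (0 <= k)%R -> (forall t, 0 <= F t) ->
  (forall t, (a <= t <= a + e)%R -> k%:E <= F t) ->
  (k * e)%:E <= \int[@lebesgue_measure R]_t F t.
Proof.
move=> e0 k0 F0 Fk.
pose A := [set` `[a, a + e]%R] : set R.
have mA : measurable A by exact: measurable_itv.
apply: le_trans (int_mono (F := fun t => (k * \1_A t)%:E) _ _).
- have := @integralZl_indic _ _ _ (@lebesgue_measure R) setT measurableT (fun _ => A) k.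
  move=> /(_ _ mA) ->; last by move=> /lt_geF; rewrite k0.
  rewrite integral_indic // setIT /A. set mm := (X in _ <= _ * X).
  have -> : mm = (if (a%:E < (a + e)%:E) then ((a + e)%:E - a%:E) else 0) by exact: lebesgue_measure_itv.
  rewrite lte_fin ltrDl.
  case: ltP => e0'.
    by rewrite -EFinD addrAC subrr add0r EFinM.
  have -> : e = 0%R by apply/eqP; rewrite eq_le e0' e0.
  by rewrite mulr0 mule0.
- by move=> t; rewrite lee_fin mulr_ge0 // indic_ge0.
- move=> t; rewrite indicE; case: (boolP (t \in A)).
    by rewrite mulr1 inE /A /= in_itv /= => /Fk.
  by rewrite mulr0 => _; exact: F0.
Qed.


Lemma lebint_ge0 n (f : n.-tuple R -> \bar R) :
  (forall x, 0 <= f x) -> 0 <= lebint_Rn f.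
Proof.
elim: n f => [|n IH] f f0 /=; first exact: f0.
apply: integral_ge0 => t _; apply: IH => x; exact: f0.
Qed.

Lemma lebint_mono n (f g : n.-tuple R -> \bar R) :
  (forall x, 0 <= f x) -> (forall x, f x <= g x) -> lebint_Rn f <= lebint_Rn g.
Proof.
elim: n f g => [|n IH] f g f0 fg /=; first exact: fg.
apply: int_mono => t; first by apply: lebint_ge0 => x; exact: f0.
by apply: IH => x; [exact: f0|exact: fg].
Qed.

Lemma lebint_superadd n (f g : n.-tuple R -> \bar R) :
  (forall x, 0 <= f x) -> (forall x, 0 <= g x) ->
  lebint_Rn f + lebint_Rn g <= lebint_Rn (fun x => f x + g x).
Proof.
elim: n f g => [|n IH] f g f0 g0 /=; first by [].
apply: le_trans (int_superadd _ _) _.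
- by move=> t; apply: lebint_ge0 => x; exact: f0.
- by move=> t; apply: lebint_ge0 => x; exact: g0.
apply: int_mono => t.
  by apply: adde_ge0; apply: lebint_ge0 => x; [exact: f0|exact: g0].
by apply: IH => x; [exact: f0|exact: g0].
Qed.

Lemma lebint_cube n (f : n.-tuple R -> \bar R) (x : n.-tuple R) (e : R) :
  (0 <= e)%R -> (forall y, 0 <= f y) ->
  (forall y, (forall i, tnth x i <= tnth y i <= tnth x i + e)%R -> 1 <= f y) ->
  (e ^+ n)%:E <= lebint_Rn f.
Proof.
elim: n f x => [|n IH] f x e0 f0 fc /=.
  by rewrite expr0; apply: fc => -[].
move: fc; case/tupleP: x => x0 x fc.
rewrite exprSr; apply: (int_box (a := x0)) => //.
- exact: exprn_ge0.
- by move=> t; apply: lebint_ge0 => y; exact: f0.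
move=> t /andP[t1 t2]; apply: (IH _ x) => // y hy.
apply: fc => i; case: (unliftP ord0 i) => [j ->|->].
  by rewrite !tnthS; exact: hy.
by rewrite !tnth0 t1 t2.
Qed.


Lemma meas_pattern (I : finType) (J : I -> interval R) (G : R -> \bar R) :
  (forall t t', (forall k, (t \in J k) = (t' \in J k)) -> G t = G t') ->
  measurable_fun setT G.
Proof.
move=> HG _ A mA; rewrite setTI.
pose Pre (s : {set I}) := [set t | (forall k, (t \in J k) = (k \in s)) /\ A (G t)].
have -> : G @^-1` A = \bigcup_(s in [set: {set I}]) Pre s.
  apply/seteqP; split => t /=.
    move=> At; exists (finset (fun k => t \in J k)) => //; split => // k.
    by rewrite inE.
  by move=> [s _ [_ ?]].
apply: fin_bigcup_measurable; first exact: finite_finset.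
move=> s _.
have [[t0 [h0 a0]]|nex] := pselect (exists t0, Pre s t0).
  have -> : Pre s = \bigcap_(k in [set: I])
      (if k \in s then [set` J k] else ~` [set` J k]).
    apply/seteqP; split => t /=.
      move=> [ht _] k _; case: ifP => ks /=.
        by rewrite /mkset ht.
      by rewrite /mkset ht ks.
    move=> ht.
    have hk k : (t \in J k) = (k \in s).
      have := ht k Logic.I; case: ifP => ks /=; first by move=> ->.
      by move/negP/negbTE ->.
    split => //; rewrite (HG t t0) // => k; by rewrite hk h0.
  apply: fin_bigcap_measurable; first exact: finite_finset.
  move=> k _; case: ifP => _; first exact: measurable_itv.
  apply: measurableC; exact: measurable_itv.
have -> : Pre s = set0.
  by apply/seteqP; split => t //= ht; apply: nex; exists t.
exact: measurable0.
Qed.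

Definition covers n (I : finType) (cb : I -> 'I_n -> interval R) :=
  forall y : n.-tuple R, exists k, in_cube (cb k) y.
Definition cconst n (I : finType) (cb : I -> 'I_n -> interval R)
  (f : n.-tuple R -> \bar R) :=
  forall k y y', in_cube (cb k) y -> in_cube (cb k) y' -> f y = f y'.

Lemma in_cube_cons n (c : 'I_n.+1 -> interval R) t (y : n.-tuple R) :
  in_cube c [tuple of t :: y] <->
  (t \in c ord0) /\ in_cube (fun i => c (lift ord0 i)) y.
Proof.
split.
  by move=> h; split; [have := h ord0; rewrite tnth0|move=> i; have := h (lift ord0 i); rewrite tnthS].
move=> [h0 h] i; case: (unliftP ord0 i) => [j ->|->]; first by rewrite tnthS.
by rewrite tnth0.
Qed.

Definition cbt n (I : finType) (cb : I -> 'I_n.+1 -> interval R) (t : R) :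
  I -> 'I_n -> interval R :=
  fun k i => if t \in cb k ord0 then cb k (lift ord0 i) else `[0%R, 0%R[%R.

Lemma covers_t n (I : finType) (cb : I -> 'I_n.+1 -> interval R) t :
  covers cb -> covers (cbt cb t).
Proof.
move=> cv y; have [k /in_cube_cons [h0 h]] := cv [tuple of t :: y].
by exists k => i; rewrite /cbt h0; exact: h.
Qed.

Lemma cconst_t n (I : finType) (cb : I -> 'I_n.+1 -> interval R) t f :
  cconst cb f -> cconst (cbt cb t) (fun y => f [tuple of t :: y]).
Proof.
move=> cf k y y'; rewrite /cbt; case tk: (t \in cb k ord0) => hy hy'.
  by apply: (cf k); apply/in_cube_cons.
suff -> : y = y' by [].
apply: eq_from_tnth => i; exfalso; have := hy i.
by rewrite in_itv /= => /andP[/le_lt_trans h /h]; rewrite ltxx.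
Qed.

Lemma lebint0 n : lebint_Rn (fun _ : n.-tuple R => 0) = 0.
Proof.
elim: n => [|n IH] //=; rewrite IH; exact: integral0.
Qed.

Lemma lebint_add n (I : finType) (cb : I -> 'I_n -> interval R) f g :
  covers cb -> cconst cb f -> cconst cb g ->
  (forall x, 0 <= f x) -> (forall x, 0 <= g x) ->
  lebint_Rn (fun x => f x + g x) = lebint_Rn f + lebint_Rn g.
Proof.
elim: n I cb f g => [|n IH] I cb f g cv cf cg f0 g0 //=.
have mes (h : n.+1.-tuple R -> \bar R) : cconst cb h ->
    measurable_fun setT (fun t => lebint_Rn (fun y => h [tuple of t :: y])).
  move=> ch; apply: (@meas_pattern I (fun k => cb k ord0)) => t t' tt'.
  congr lebint_Rn; apply: funext => y.
  have [k /in_cube_cons [h0 hk]] := cv [tuple of t :: y].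
  apply: (ch k); apply/in_cube_cons; split => //.
  by rewrite -tt'.
under eq_integral => t _.
  rewrite (IH I (cbt cb t) (fun y => f [tuple of t :: y]) (fun y => g [tuple of t :: y])).
  - over.
  - exact: covers_t.
  - exact: cconst_t.
  - exact: cconst_t.
  - by move=> x; exact: f0.
  - by move=> x; exact: g0.
rewrite ge0_integralD //.
- by move=> t _; apply: lebint_ge0 => x; exact: f0.
- exact: mes.
- by move=> t _; apply: lebint_ge0 => x; exact: g0.
- exact: mes.
Qed.

Lemma lebint_sum n (I : finType) (cb : I -> 'I_n -> interval R) m
  (F : nat -> n.-tuple R -> \bar R) :
  covers cb -> (forall i, (i < m)%N -> cconst cb (F i)) -> (forall i x, 0 <= F i x) ->
  lebint_Rn (fun x => \sum_(i < m) F i x) = \sum_(i < m) lebint_Rn (F i).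
Proof.
move=> cv cF F0; elim: m cF => [|m IH] cF.
  by rewrite big_ord0; under eq_fun do rewrite big_ord0; exact: lebint0.
rewrite big_ord_recr /= -IH; last by move=> i im; apply: cF; exact: ltnW.
under eq_fun do rewrite big_ord_recr /=.
apply: (lebint_add cv) => //.
- move=> k y y' hy hy'; apply: eq_bigr => i _; apply: (cF i _ k) => //.
  exact: ltn_trans (ltn_ord i) (ltnSn m).
- exact: cF.
- by move=> x; apply: sume_ge0 => i _.
Qed.

End Integ.

End Integ.
Import Integ.

Section Inter.
Variables (K : fieldType) (R : realType) (n : nat).

Lemma tnth_shift (e : R) (x : n.-tuple R) i : tnth (shift e x) i = tnth x i + e.
Proof. by rewrite tnth_mktuple. Qed.
Ltac ptac := let i := fresh in move=> i; rewrite ?tnth_shift; lra.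

Lemma mx_eq_rows p q (M N : 'M[K]_(p, q)) :
  (forall a : 'rV_p, a *m M = a *m N) -> M = N.
Proof. by move=> H; apply/row_matrixP => i; rewrite !rowE H. Qed.

Lemma half (A B : pmodRn K R n)
  (Rl : forall x, 'rV[K]_(pdim A x) -> 'rV[K]_(pdim B x) -> Prop) (e : R) :
  (forall x, Rl x 0 0) ->
  (forall x l a1 b1 a2 b2, Rl x a1 b1 -> Rl x a2 b2 -> Rl x (l *: a1 + a2) (l *: b1 + b2)) ->
  (forall x y a, ptle (shift e x) y -> exists b, Rl y (a *m pmap A x y) b) ->
  (forall x y b, ptle (shift e x) y -> Rl x 0 b -> b *m pmap B x y = 0) ->
  exists phi : forall x, 'M[K]_(pdim A x, pdim B (shift (e + e) x)),
    forall x a b, Rl (shift e x) (a *m pmap A x (shift e x)) b ->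
      a *m phi x = b *m pmap B (shift e x) (shift (e + e) x).
Proof.
move=> R0 Rlin H1 H2.
have le1 (x : n.-tuple R) : ptle (shift e x) (shift e x) by move=> i.
have le2 (x : n.-tuple R) : ptle (shift e (shift e x)) (shift (e + e) x).
  by move=> i; rewrite !tnth_shift addrA.
have ch (x : n.-tuple R) (i : 'I_(pdim A x)) : exists b,
    Rl (shift e x) (delta_mx 0 i *m pmap A x (shift e x)) b.
  exact: H1.
pose c x i := projT1 (cid (ch x i)).
have cP x i : Rl (shift e x) (delta_mx 0 i *m pmap A x (shift e x)) (c x i).
  exact: projT2 (cid (ch x i)).
pose Phi x := \matrix_(i < pdim A x) c x i.
have PhiP x a : Rl (shift e x) (a *m pmap A x (shift e x)) (a *m Phi x).
  rewrite [in X in Rl _ X](row_sum_delta a) mulmx_suml mulmx_sum_row.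
  apply: (big_ind2 (Rl (shift e x))) => //.
  - by move=> a1 b1 a2 b2 h1 h2; have := Rlin _ 1 _ _ _ _ h1 h2; rewrite !scale1r.
  - move=> i _; rewrite rowK -scalemxAl.
    by have := Rlin _ (a 0 i) _ _ _ _ (cP x i) (R0 _); rewrite !addr0.
exists (fun x => Phi x *m pmap B (shift e x) (shift (e + e) x)) => x a b hb.
have := Rlin _ (-1) _ _ _ _ (PhiP x a) hb.
rewrite !scaleN1r addNr => /(H2 _ _ _ (le2 x)) /eqP.
by rewrite mulmxDl mulNmx (addrC (- _)) subr_eq0 mulmxA => /eqP ->.
Qed.


Lemma interleave_rel (A B : pmodRn K R n)
  (Rl : forall x, 'rV[K]_(pdim A x) -> 'rV[K]_(pdim B x) -> Prop) (e : R) :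
  0 <= e ->
  (forall x, Rl x 0 0) ->
  (forall x l a1 b1 a2 b2, Rl x a1 b1 -> Rl x a2 b2 -> Rl x (l *: a1 + a2) (l *: b1 + b2)) ->
  (forall x y a b, ptle x y -> Rl x a b -> Rl y (a *m pmap A x y) (b *m pmap B x y)) ->
  (forall x y a, ptle (shift e x) y -> exists b, Rl y (a *m pmap A x y) b) ->
  (forall x y b, ptle (shift e x) y -> exists a, Rl y a (b *m pmap B x y)) ->
  (forall x y b, ptle (shift e x) y -> Rl x 0 b -> b *m pmap B x y = 0) ->
  (forall x y a, ptle (shift e x) y -> Rl x a 0 -> a *m pmap A x y = 0) ->
  interleaving (e + e) A B.
Proof.
move=> e0 R0 Rlin Rnat H1 H3 H2 H4.
have [phi phiP] := half R0 Rlin H1 H2.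
have [psi psiP] := @half B A (fun x b a => Rl x a b) e R0
  (fun x l a1 b1 a2 b2 h1 h2 => Rlin x l b1 a1 b2 a2 h1 h2) H3 H4.
have le1 (x : n.-tuple R) : ptle (shift e x) (shift e x) by move=> i.
have lexs (f : R) (x : n.-tuple R) : 0 <= f -> ptle x (shift f x).
  by move=> f0 i; rewrite tnth_shift lerDl.
have lessf (f g : R) (x : n.-tuple R) : f <= g -> ptle (shift f x) (shift g x).
  by move=> fg i; rewrite !tnth_shift lerD2l.
have lesh (f : R) (x y : n.-tuple R) : ptle x y -> ptle (shift f x) (shift f y).
  by move=> xy i; rewrite !tnth_shift lerD2r.
have e2 : 0 <= e + e by rewrite addr_ge0.
have ee : e <= e + e by rewrite lerDl.
have nat_gen (A' B' : pmodRn K R n)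
  (Rl' : forall x, 'rV[K]_(pdim A' x) -> 'rV[K]_(pdim B' x) -> Prop)
  (ph : forall x, 'M[K]_(pdim A' x, pdim B' (shift (e + e) x))) :
  (forall x y a b, ptle x y -> Rl' x a b -> Rl' y (a *m pmap A' x y) (b *m pmap B' x y)) ->
  (forall x y a, ptle (shift e x) y -> exists b, Rl' y (a *m pmap A' x y) b) ->
  (forall x a b, Rl' (shift e x) (a *m pmap A' x (shift e x)) b ->
      a *m ph x = b *m pmap B' (shift e x) (shift (e + e) x)) ->
  forall x y, ptle x y ->
    pmap A' x y *m ph y = ph x *m pmap B' (shift (e + e) x) (shift (e + e) y).
  move=> Rn' H1' phP x y xy; apply: mx_eq_rows => a.
  have [b hb] := H1' x (shift e x) a (le1 x).
  have hb' := Rn' _ _ _ _ (lesh e _ _ xy) hb.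
  rewrite -mulmxA -(pmap_comp _ (lexs _ _ e0) (lesh e _ _ xy)) in hb'.
  rewrite (pmap_comp _ xy (lexs _ _ e0)) mulmxA in hb'.
  rewrite mulmxA (phP _ _ _ hb') mulmxA (phP _ _ _ hb) -!mulmxA.
  rewrite -(pmap_comp _ (lesh e _ _ xy) (lessf _ _ _ ee)).
  by rewrite -(pmap_comp _ (lessf _ _ _ ee) (lesh _ _ _ xy)).
have comp_gen (A' B' : pmodRn K R n)
  (Rl' : forall x, 'rV[K]_(pdim A' x) -> 'rV[K]_(pdim B' x) -> Prop)
  (ph : forall x, 'M[K]_(pdim A' x, pdim B' (shift (e + e) x)))
  (ps : forall x, 'M[K]_(pdim B' x, pdim A' (shift (e + e) x))) :
  (forall x y a b, ptle x y -> Rl' x a b -> Rl' y (a *m pmap A' x y) (b *m pmap B' x y)) ->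
  (forall x l a1 b1 a2 b2, Rl' x a1 b1 -> Rl' x a2 b2 -> Rl' x (l *: a1 + a2) (l *: b1 + b2)) ->
  (forall x y a, ptle (shift e x) y -> exists b, Rl' y (a *m pmap A' x y) b) ->
  (forall x y b, ptle (shift e x) y -> exists a, Rl' y a (b *m pmap B' x y)) ->
  (forall x y a, ptle (shift e x) y -> Rl' x a 0 -> a *m pmap A' x y = 0) ->
  (forall x a b, Rl' (shift e x) (a *m pmap A' x (shift e x)) b ->
      a *m ph x = b *m pmap B' (shift e x) (shift (e + e) x)) ->
  (forall x b a, Rl' (shift e x) a (b *m pmap B' x (shift e x)) ->
      b *m ps x = a *m pmap A' (shift e x) (shift (e + e) x)) ->
  forall x, ph x *m ps (shift (e + e) x) = pmap A' x (shift (e + e) (shift (e + e) x)).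
  move=> Rn' Rlin' H1' H3' H4' phP psP x; apply: mx_eq_rows => a.
  have [b hb] := H1' x (shift e x) a (le1 x).
  set y := shift (e + e) x.
  have [c hc] := H3' y (shift e y) (b *m pmap B' (shift e x) y) (le1 y).
  rewrite mulmxA (phP _ _ _ hb) (psP _ _ _ hc).
  have l1 : ptle (shift e x) (shift e y) by rewrite /y; ptac.
  have hb2 := Rn' _ _ _ _ l1 hb.
  rewrite -mulmxA -(pmap_comp _ (lexs _ _ e0) l1) in hb2.
  rewrite (pmap_comp _ (_ : ptle (shift e x) y) (lexs _ _ e0)) ?mulmxA in hb2; last by rewrite /y; ptac.
  have hd := Rlin' _ (-1) _ _ _ _ hb2 hc.
  rewrite !scaleN1r addNr in hd.
  have l2 : ptle (shift e (shift e y)) (shift (e + e) y) by ptac.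
  move/(H4' _ _ _ l2)/eqP: hd.
  rewrite mulmxDl mulNmx (addrC (- _)) subr_eq0 => /eqP ->.
  by rewrite -mulmxA -pmap_comp //; rewrite /y; ptac.
exists phi, psi; split; last split; last split.
- exact: nat_gen Rnat H1 phiP.
- exact: (@nat_gen B A (fun x b a => Rl x a b) psi
          (fun x y b a xy h => Rnat x y a b xy h) H3 psiP).
- exact: (comp_gen A B Rl phi psi Rnat Rlin H1 H3 H4 phiP psiP).
- exact: (@comp_gen B A (fun x b a => Rl x a b) psi phi
          (fun x y b a xy h => Rnat x y a b xy h)
          (fun x l a1 b1 a2 b2 h1 h2 => Rlin x l b1 a1 b2 a2 h1 h2) H3 H1 H2 psiP phiP).
Qed.

End Inter.


Section Lin.
Variables (K : fieldType) (T : Type) (le : T -> T -> Prop).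

Lemma hom_inj (M N : pmod K le) (f : hom M N) x (c : 'rV_(pdim M x)) :
  \rank (kermx (hcomp f x)) = 0%N -> c *m hcomp f x = 0 -> c = 0.
Proof.
move=> /eqP; rewrite mxrank_eq0 => /eqP k0 /eqP.
by rewrite -sub_kermx k0 submx0 => /eqP.
Qed.

Lemma hom_surj (M N : pmod K le) (f : hom M N) x (w : 'rV_(pdim N x)) :
  (pdim N x - \rank (hcomp f x) = 0)%N -> exists c, w = c *m hcomp f x.
Proof.
move=> /eqP; rewrite subn_eq0 => hr.
have full : row_full (hcomp f x).
  by rewrite /row_full eqn_leq rank_leq_col hr.
by exists (w *m pinvmx (hcomp f x)); rewrite mulmxKpV // submx_full.
Qed.
End Lin.

Section Zig.
Variables (K : fieldType) (R : realType) (n : nat).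
Variables (C D : nat -> pmodRn K R n)
  (gl : forall i, hom (C i.+1) (D i)) (gr : forall i, hom (C i.+1) (D i.+1)).

Fixpoint Rel (k : nat) (x : n.-tuple R) {struct k} :
    'rV[K]_(pdim (D 0) x) -> 'rV[K]_(pdim (D k) x) -> Prop :=
  match k as k0 return 'rV[K]_(pdim (D 0) x) -> 'rV[K]_(pdim (D k0) x) -> Prop with
  | 0 => fun a b => a = b
  | k'.+1 => fun a d => exists b c, @Rel k' x a b /\ b = c *m hcomp (gl k') x /\
                                 d = c *m hcomp (gr k') x
  end.
Arguments Rel : clear implicits.

Lemma Rel0 k x : Rel k x 0 0.
Proof.
elim: k => [|k IH] //=; exists 0, 0; by rewrite !mul0mx.
Qed.

Lemma Rel_lin k x l a1 b1 a2 b2 :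
  Rel k x a1 b1 -> Rel k x a2 b2 -> Rel k x (l *: a1 + a2) (l *: b1 + b2).
Proof.
elim: k b1 b2 => [|k IH] b1 b2 /=; first by move=> -> ->.
move=> [b1' [c1 [h1 [e1 ->]]]] [b2' [c2 [h2 [e2 ->]]]].
exists (l *: b1' + b2'), (l *: c1 + c2); split; first exact: IH.
by rewrite !mulmxDl -!scalemxAl e1 e2.
Qed.

Lemma Rel_nat k x y a b : ptle x y -> Rel k x a b ->
  Rel k y (a *m pmap (D 0) x y) (b *m pmap (D k) x y).
Proof.
move=> xy; elim: k b => [|k IH] b /=; first by move=> ->.
move=> [b' [c [h [e ->]]]].
exists (b' *m pmap (D k) x y), (c *m pmap (C k.+1) x y); split; first exact: IH.
by rewrite -!mulmxA !hnat // e mulmxA.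
Qed.

Definition Good (m : nat) (z : n.-tuple R) :=
  forall i, (i < m)%N -> dim_ker (gl i) z = 0%N /\ dim_coker (gl i) z = 0%N /\
                         dim_ker (gr i) z = 0%N /\ dim_coker (gr i) z = 0%N.

Lemma Rel_good m k z : (k <= m)%N -> Good m z ->
  (forall a, exists b, Rel k z a b) /\ (forall b, exists a, Rel k z a b) /\
  (forall a b, Rel k z a b -> (a = 0 <-> b = 0)).
Proof.
move=> km G; elim: k km => [|k IH] km /=.
  by split; [move=> a; exists a|split; [move=> b; exists b|move=> a b ->]].
have [k1 [k2 k3]] := G k km.
have [IH1 [IH2 IH3]] := IH (ltnW km).
split; last split.
- move=> a; have [b hb] := IH1 a.
  have [c hc] := @hom_surj _ _ _ _ _ (gl k) z b k2.
  by exists (c *m hcomp (gr k) z), b, c.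
- move=> d; have [c hc] := @hom_surj _ _ _ _ _ (gr k) z d k3.2.
  have [a ha] := IH2 (c *m hcomp (gl k) z).
  by exists a, (c *m hcomp (gl k) z), c.
- move=> a d [b [c [h [eb ->]]]]; rewrite (IH3 _ _ h) eb; split.
      by move=> /(hom_inj k1) ->; rewrite mul0mx.
  by move=> /(hom_inj k3.1) ->; rewrite mul0mx.
Qed.

End Zig.



Section Cov.
Variables (K : fieldType) (R : realType) (n : nat).

Definition cmeet (I1 I2 : finType) (cb1 : I1 -> 'I_n -> interval R)
  (cb2 : I2 -> 'I_n -> interval R) : (I1 * I2)%type -> 'I_n -> interval R :=
  fun k i => Order.meet (cb1 k.1 i) (cb2 k.2 i).

Lemma in_cmeet (I1 I2 : finType) (cb1 : I1 -> 'I_n -> interval R)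
  (cb2 : I2 -> 'I_n -> interval R) k y :
  in_cube (cmeet cb1 cb2 k) y <-> in_cube (cb1 k.1) y /\ in_cube (cb2 k.2) y.
Proof.
split.
  by move=> h; split=> i; have := h i; rewrite /cmeet in_itvI => /andP[].
by move=> [h1 h2] i; rewrite /cmeet in_itvI h1 h2.
Qed.

Lemma covers_meet (I1 I2 : finType) (cb1 : I1 -> 'I_n -> interval R)
  (cb2 : I2 -> 'I_n -> interval R) :
  covers cb1 -> covers cb2 -> covers (cmeet cb1 cb2).
Proof.
move=> c1 c2 y; have [k1 h1] := c1 y; have [k2 h2] := c2 y.
by exists (k1, k2); apply/in_cmeet.
Qed.

Lemma cconst_meetl (I1 I2 : finType) (cb1 : I1 -> 'I_n -> interval R)
  (cb2 : I2 -> 'I_n -> interval R) f :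
  cconst cb1 f -> cconst (cmeet cb1 cb2) f.
Proof. by move=> h k y y' /in_cmeet[hy _] /in_cmeet[hy' _]; exact: (h k.1). Qed.

Lemma cconst_meetr (I1 I2 : finType) (cb1 : I1 -> 'I_n -> interval R)
  (cb2 : I2 -> 'I_n -> interval R) f :
  cconst cb2 f -> cconst (cmeet cb1 cb2) f.
Proof. by move=> h k y y' /in_cmeet[_ hy] /in_cmeet[_ hy']; exact: (h k.2). Qed.

Lemma inv_dims a b (A : 'M[K]_(a, b)) (A' : 'M[K]_(b, a)) :
  A *m A' = 1%:M -> A' *m A = 1%:M -> a = b.
Proof.
move=> h1 h2; apply/eqP; rewrite eqn_leq; apply/andP; split.
  have <- : \rank (A *m A') = a by rewrite h1 mxrank1.
  exact: leq_trans (mxrankM_maxl _ _) (rank_leq_col A).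
have <- : \rank (A' *m A) = b by rewrite h2 mxrank1.
exact: leq_trans (mxrankM_maxl _ _) (rank_leq_col A').
Qed.

Lemma rank_inv_l a b c (A : 'M[K]_(a, b)) (A' : 'M[K]_(b, a)) (F : 'M[K]_(b, c)) :
  A' *m A = 1%:M -> \rank (A *m F) = \rank F.
Proof.
move=> h; apply/eqP; rewrite eqn_leq mxrankM_maxr /=.
have {1}-> : F = A' *m (A *m F) by rewrite mulmxA h mul1mx.
exact: mxrankM_maxr.
Qed.

Lemma rank_inv_r a b c (F : 'M[K]_(a, b)) (B : 'M[K]_(b, c)) (B' : 'M[K]_(c, b)) :
  B *m B' = 1%:M -> \rank (F *m B) = \rank F.
Proof.
move=> h; apply/eqP; rewrite eqn_leq mxrankM_maxl /=.
have {1}-> : F = (F *m B) *m B' by rewrite -mulmxA h mulmx1.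
exact: mxrankM_maxl.
Qed.

Lemma enc_cover (X : pmodRn K R n) : cubically_encoded X ->
  exists (I : finType) (cb : I -> 'I_n -> interval R), covers cb /\
   forall k y y', in_cube (cb k) y -> in_cube (cb k) y' -> ptle y y' ->
     exists A' : 'M[K]_(pdim X y', pdim X y),
       pmap X y y' *m A' = 1%:M /\ A' *m pmap X y y' = 1%:M.
Proof.
move=> [disp [P [e [X' [emono [fib [phi [psi [inv natX]]]]]]]]].
have ch p : exists kc : {k : nat & 'I_k -> 'I_n -> interval R},
    forall x, e x = p <-> exists j, in_cube (projT2 kc j) x.
  by have [k [c h]] := fib p; exists (existT _ k c).
pose kc p := projT1 (cid (ch p)).
have kcP p : forall x, e x = p <-> exists j, in_cube (projT2 (kc p) j) x.
  exact: projT2 (cid (ch p)).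
exists {p : P & 'I_(projT1 (kc p))}, (fun s => projT2 (kc (tag s)) (tagged s)); split.
  move=> y; have [j hj] := (kcP (e y) y).1 erefl.
  by exists (Tagged (fun p => 'I_(projT1 (kc p))) j).
move=> [p j] y y' /= hy hy' yy'.
have ey : e y = p by apply/(kcP p y); exists j.
have ey' : e y' = p by apply/(kcP p y'); exists j.
have le1 : (e y <= e y')%O by rewrite ey ey'.
have le2 : (e y' <= e y)%O by rewrite ey ey'.
have Xe : pmap X y y' = phi y *m pmap X' (e y) (e y') *m psi y'.
  by rewrite -(natX _ _ yy') -mulmxA (inv y').1 mulmx1.
exists (phi y' *m pmap X' (e y') (e y) *m psi y); rewrite Xe; split.
  rewrite !mulmxA -[phi y *m _ *m psi y' *m phi y']mulmxA (inv y').2 mulmx1.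
  by rewrite -(mulmxA (phi y)) -(pmap_comp _ le1 le2) pmap_id mulmx1 (inv y).1.
rewrite !mulmxA -[phi y' *m _ *m psi y *m phi y]mulmxA (inv y).2 mulmx1.
by rewrite -(mulmxA (phi y')) -(pmap_comp _ le2 le1) pmap_id mulmx1 (inv y').1.
Qed.


Lemma hom_cover (X Y : pmodRn K R n) (f : hom X Y) :
  cubically_encoded X -> cubically_encoded Y ->
  exists (I : finType) (cb : I -> 'I_n -> interval R), covers cb /\
   cconst cb (fun z => ((dim_ker f z)%:R)%:E) /\
   cconst cb (fun z => ((dim_coker f z)%:R)%:E).
Proof.
move=> /enc_cover [IX [cbX [cvX invX]]] /enc_cover [IY [cbY [cvY invY]]].
exists (IX * IY)%type, (cmeet cbX cbY); split; first exact: covers_meet.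
have core k w z : in_cube (cmeet cbX cbY k) w -> in_cube (cmeet cbX cbY k) z ->
    ptle w z -> dim_ker f w = dim_ker f z /\ dim_coker f w = dim_coker f z.
  move=> /in_cmeet [hwX hwY] /in_cmeet [hzX hzY] wz.
  have [A' [hA1 hA2]] := invX _ _ _ hwX hzX wz.
  have [B' [hB1 hB2]] := invY _ _ _ hwY hzY wz.
  have rk : \rank (hcomp f w) = \rank (hcomp f z).
    rewrite -(rank_inv_r _ hB1) -hnat // (rank_inv_l _ hA2) //.
  rewrite /dim_ker /dim_coker !mxrank_ker rk.
  by rewrite (inv_dims hA1 hA2) (inv_dims hB1 hB2).
have key k y y' : in_cube (cmeet cbX cbY k) y -> in_cube (cmeet cbX cbY k) y' ->
    dim_ker f y = dim_ker f y' /\ dim_coker f y = dim_coker f y'.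
  move=> hy hy'.
  pose w := [tuple Num.min (tnth y i) (tnth y' i) | i < n].
  have hw : in_cube (cmeet cbX cbY k) w.
    move=> i; rewrite tnth_mktuple; case: (leP (tnth y i) (tnth y' i)) => h.
    - exact: hy.
    - exact: hy'.
  have wy : ptle w y by move=> i; rewrite tnth_mktuple ge_min lexx.
  have wy' : ptle w y' by move=> i; rewrite tnth_mktuple ge_min lexx orbT.
  have [h1 h2] := core _ _ _ hw hy wy.
  have [h3 h4] := core _ _ _ hw hy' wy'.
  by rewrite -h1 -h2 h3 h4.
by split => k y y' hy hy'; have [h1 h2] := key k y y' hy hy'; rewrite ?h1 ?h2.
Qed.

End Cov.


Section Key.
Variables (K : fieldType) (R : realType) (n : nat).

Lemma ptle_trans (x y z : n.-tuple R) : ptle x y -> ptle y z -> ptle x z.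
Proof. by move=> h1 h2 i; exact: le_trans (h1 i) (h2 i). Qed.

Lemma cconst_add (I : finType) (cb : I -> 'I_n -> interval R) (f g : n.-tuple R -> \bar R) :
  cconst cb f -> cconst cb g -> cconst cb (fun z => (f z + g z)%E).
Proof. by move=> hf hg k y y' hy hy'; rewrite (hf k y y') // (hg k y y'). Qed.

Lemma common_cover (C D : nat -> pmodRn K R n)
  (gl : forall i, hom (C i.+1) (D i)) (gr : forall i, hom (C i.+1) (D i.+1)) m :
  (forall i, (i <= m)%N -> cubically_encoded (D i)) ->
  (forall i, (0 < i <= m)%N -> cubically_encoded (C i)) ->
  exists (I : finType) (cb : I -> 'I_n -> interval R), covers cb /\
    forall i, (i < m)%N ->
      [/\ cconst cb (fun z => ((dim_ker (gl i) z)%:R)%:E),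
          cconst cb (fun z => ((dim_coker (gl i) z)%:R)%:E),
          cconst cb (fun z => ((dim_ker (gr i) z)%:R)%:E) &
          cconst cb (fun z => ((dim_coker (gr i) z)%:R)%:E)].
Proof.
move=> eD eC.
suff : forall m', (m' <= m)%N -> exists (I : finType) (cb : I -> 'I_n -> interval R),
  covers cb /\ forall i, (i < m')%N ->
      [/\ cconst cb (fun z => ((dim_ker (gl i) z)%:R)%:E),
          cconst cb (fun z => ((dim_coker (gl i) z)%:R)%:E),
          cconst cb (fun z => ((dim_ker (gr i) z)%:R)%:E) &
          cconst cb (fun z => ((dim_coker (gr i) z)%:R)%:E)].
  by move=> /(_ m (leqnn m)).
elim=> [|m' IH] hm.
  exists unit, (fun _ _ => `]-oo, +oo[%R); split; last by [].
  by move=> y; exists tt => i; rewrite in_itv.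
have [I [cb [cv hc]]] := IH (ltnW hm).
have [I1 [cb1 [cv1 [h1 h2]]]] := hom_cover (gl m') (eC m'.+1 hm) (eD m' (ltnW hm)).
have [I2 [cb2 [cv2 [h3 h4]]]] := hom_cover (gr m') (eC m'.+1 hm) (eD m'.+1 hm).
exists ((I * I1) * I2)%type, (cmeet (cmeet cb cb1) cb2); split.
  by apply: covers_meet => //; exact: covers_meet.
move=> i; rewrite ltnS leq_eqVlt => /orP[/eqP ->|im].
  split; [apply: cconst_meetl; exact: cconst_meetr|apply: cconst_meetl; exact: cconst_meetr
         |exact: cconst_meetr|exact: cconst_meetr].
have [a1 a2 a3 a4] := hc i im.
by split; apply: cconst_meetl; apply: cconst_meetl.
Qed.


Lemma key_lemma (M N : pmodRn K R n) (c : \bar R) (e : R) :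
  0 < e -> zigzag_cost M N c -> (c < (e ^+ n)%:E)%E -> interleaving (e + e) M N.
Proof.
move=> e0 [m [C [D [gl [gr [m0 [HD0 [HDm [eD [eC Hc]]]]]]]]]] hc.
rewrite -HD0 -HDm.
have [I [cb [cv hcb]]] := common_cover gl gr eD eC.
pose F i z : \bar R := (((dim_ker (gl i) z)%:R)%:E + ((dim_coker (gl i) z)%:R)%:E +
  (((dim_ker (gr i) z)%:R)%:E + ((dim_coker (gr i) z)%:R)%:E))%E.
have F0 i z : (0 <= F i z)%E.
  by rewrite /F !adde_ge0 // lee_fin ler0n.
have cF i : (i < m)%N -> cconst cb (F i).
  by move=> im; have [a1 a2 a3 a4] := hcb i im; apply: cconst_add; apply: cconst_add.
have costF : c = (\sum_(i < m) lebint_Rn (F i))%E.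
  rewrite Hc; apply: eq_bigr => i _.
  have [a1 a2 a3 a4] := hcb i (ltn_ord i).
  rewrite /F (lebint_add cv); try (apply: cconst_add => //).
  - rewrite (lebint_add cv a1 a2) ?(lebint_add cv a3 a4) //;
      by move=> x; rewrite lee_fin ler0n.
  - by move=> x; rewrite adde_ge0 // lee_fin ler0n.
  - by move=> x; rewrite adde_ge0 // lee_fin ler0n.
have cube x : exists z, [/\ ptle x z, ptle z (shift e x) & Good gl gr m z].
  have [//|nz] := pselect (exists z, [/\ ptle x z, ptle z (shift e x) & Good gl gr m z]).
  exfalso.
  have : ((e ^+ n)%:E <= c)%E.
    rewrite costF -(lebint_sum cv cF F0).
    apply: (lebint_cube (x := x)) => [|y|y hy]; first exact: ltW.
      by apply: sume_ge0 => i _.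
    have ng : ~ Good gl gr m y.
      move=> G; apply: nz; exists y; split => // i.
        by have /andP[] := hy i.
      by rewrite tnth_shift; have /andP[] := hy i.
    have [i [im hi]] : exists i, (i < m)%N /\
        (dim_ker (gl i) y + dim_coker (gl i) y + (dim_ker (gr i) y + dim_coker (gr i) y) != 0)%N.
      have [//|nex] := pselect (exists i, (i < m)%N /\
        (dim_ker (gl i) y + dim_coker (gl i) y + (dim_ker (gr i) y + dim_coker (gr i) y) != 0)%N).
      exfalso; apply: ng => i im.
      have : (dim_ker (gl i) y + dim_coker (gl i) y + (dim_ker (gr i) y + dim_coker (gr i) y) == 0)%N.
        by apply/negP => h; apply: nex; exists i; split => //; exact/negP.
      by rewrite !addn_eq0 => /andP[/andP[/eqP -> /eqP ->] /andP[/eqP -> /eqP ->]].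
    rewrite (bigD1 (Ordinal im)) //=.
    apply: le_trans (leeDl _ _); last by apply: sume_ge0 => j _.
    rewrite /F -!EFinD lee_fin -!natrD ler1n lt0n.
    exact: hi.
  by move=> /(lt_le_trans hc); rewrite ltxx.
apply: (interleave_rel (Rl := fun x => @Rel K R n C D gl gr m x) (ltW e0)).
- by move=> x; exact: Rel0.
- by move=> x l a1 b1 a2 b2; exact: Rel_lin.
- by move=> x y a b; exact: Rel_nat.
- move=> x y a sy; have [z [xz zs G]] := cube x.
  have zy := ptle_trans zs sy.
  have [g1 _] := Rel_good (leqnn m) G.
  have [b hb] := g1 (a *m pmap (D 0%N) x z).
  exists (b *m pmap (D m) z y).
  by have := Rel_nat zy hb; rewrite -mulmxA -pmap_comp.
- move=> x y b sy; have [z [xz zs G]] := cube x.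
  have zy := ptle_trans zs sy.
  have [_ [g2 _]] := Rel_good (leqnn m) G.
  have [a ha] := g2 (b *m pmap (D m) x z).
  exists (a *m pmap (D 0%N) z y).
  by have := Rel_nat zy ha; rewrite -mulmxA -pmap_comp.
- move=> x y b sy hb; have [z [xz zs G]] := cube x.
  have zy := ptle_trans zs sy.
  have [_ [_ g3]] := Rel_good (leqnn m) G.
  have := Rel_nat xz hb; rewrite mul0mx => /g3 [h _].
  by rewrite (pmap_comp _ xz zy) mulmxA h // mul0mx.
- move=> x y a sy ha; have [z [xz zs G]] := cube x.
  have zy := ptle_trans zs sy.
  have [_ [_ g3]] := Rel_good (leqnn m) G.
  have := Rel_nat xz ha; rewrite mul0mx => /g3 [_ h].
  by rewrite (pmap_comp _ xz zy) mulmxA h // mul0mx.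
Qed.

End Key.


Theorem mainTheorem3 (K : fieldType) (R : realType) (n : nat) (hn : (0 < n)%N)
    (M N : pmodRn K R n) :
  cubically_encoded M -> cubically_encoded N ->
  (interleaving_dist M N <= 4%:E * poweR (hilbert_path_dist M N) (n%:R^-1))%E.
Proof.
move=> _ _.
have L0 : (0 <= hilbert_path_dist M N)%E.
  apply: le_ereal_inf_tmp => _ [m [C [D [gl [gr [_ [_ [_ [_ [_ ->]]]]]]]]]].
  apply: sume_ge0 => i _; rewrite /hom_cost /hilbert.
  by rewrite !adde_ge0 //; apply: lebint_ge0 => x; rewrite lee_fin ler0n.
have ninv0 : n%:R^-1 != 0 :> R by rewrite invr_eq0 pnatr_eq0 -lt0n.
have dI e : 0 < e -> interleaving e M N -> (interleaving_dist M N <= e%:E)%E.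
  by move=> e0 h; apply: ereal_inf_lbound; exists e.
case E: (hilbert_path_dist M N) L0 => [r| |] //= L0; last first.
  by rewrite (negbTE ninv0) muleC gt0_mulye ?leey // lte_fin.
rewrite lee_fin in L0.
rewrite -EFinM.
set p := r `^ n%:R^-1.
have p0 : 0 <= p by exact: powR_ge0.
have pn : p ^+ n = r.
  rewrite /p -powR_mulrn ?powR_ge0 // -powRrM mulVf ?powRr1 //.
  by rewrite pnatr_eq0 -lt0n.
apply/lee_addgt0Pr => d d0.
set e := 2 * p + d / 2.
have e0 : 0 < e by rewrite /e; lra.
have ren : r < e ^+ n.
  apply: le_lt_trans (_ : (2 * p) ^+ n < e ^+ n).
    rewrite exprMn pn -[X in X <= _]mul1r ler_wpM2r //.
    by apply: exprn_ege1; lra.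
  rewrite ltrXn2r -?lt0n //; first by rewrite mulr_ge0.
  by rewrite /e; lra.
have : (hilbert_path_dist M N < (e ^+ n)%:E)%E by rewrite E lte_fin.
move=> /ereal_inf_lt [c Sc cl].
apply: le_trans (dI (e + e) _ (key_lemma e0 Sc cl)) _; first by lra.
by rewrite -EFinD lee_fin /e; lra.
Qed.
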